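(* Consider an execution of the PermitBFT protocol during a phase of synchronous operation. If round $i$ is unified, its creator $u=v_{i\bmod n}$ is honest, and all honest nodes issue permits for the same position in round $i$, then $u$ creates a block in round $i$.
   Context: PermitBFT protocol. There are $n$ nodes $v_0,\dots,v_{n-1}$; exactly $f<n/3$ are byzantine, the remaining $n-f$ are honest and follow the protocol. A position is a finite set of blocks. A permit is a signed tuple $(r,p)$. A proof for $(r,p)$ is a set of $2f+1$ permits for $(r,p)$ from distinct nodes. A block of round $r$ is signed by the creator $v_{r\bmod n}$ and contains a proof for $(r,p)$. A proposal of round $r$ is a position together with at least $2f+1$ round-$r$ permits from distinct nodes. Honest node: round $:=0$, current $:=\{\text{genesis}\}$; each round with $c=\text{round}\bmod n$: (1) send permit (round, current) to $v_c$; (2) if it is $v_c$: start the creator timeout; once $2f+1$ permits of this round for one position $p$ are held, broadcast a block with this proof at $p$ and stop; if the creator timeout expires first, broadcast a proposal if at least $2f+1$ permits of this round are held, and stop; also stop upon receiving a block, proposal or $2f+1$ timeout messages of a later round; (3) repeat: upon receiving a block or proposal of a round $r'\ge$ round, set round $:=r'$ and current accordingly and go to (4); when the round timeout expires, broadcast timeout(round); if holding $2f+1$ timeout messages for some round $\ge$ round, jump to the largest such round, forward them, go to (4); (4) round $:=$ round$+1$. Synchronous operation: every message between honest nodes is delivered within a known bound $\Delta$, local timers are reliable, local computation takes no time, and $2\Delta<\text{creator timeout}<3\Delta$, $5\Delta<\text{round timeout}$. Let $r_{\max}(t)$ be the maximum round-variable value over honest nodes at time $t$; round $i$ starts at $T_i=\min\{t: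 r_{\max}(t)\ge i\}$; round $i$ is unified if all honest nodes start executing round $i$ within $[T_i,T_i+\Delta]$. *)

(* Defs.v *)
From HB Require Import structures.
From mathcomp Require Import all_boot all_order all_algebra.
From mathcomp Require Import reals.
From Stdlib Require List.

Set Implicit Arguments.
Unset Strict Implicit.
Unset Printing Implicit Defensive.

Import Order.TTheory GRing.Theory Num.Theory.
Local Open Scope ring_scope.

Section PermitBFT.

(* n nodes v_0..v_{n-1} (the ordinals 'I_n); f = number of byzantine nodes;
   P = type of positions (finite sets of blocks, kept abstract). *)
Variables (n f : nat) (P : Type).

Definition node := 'I_n.

(* Every component carries the signature of the indicated node.
   - Permit w r p           : permit (r,p) signed by w
   - Block c r p prf        : block of round r signed by its creator c, with the
                              proof prf = list of signers of permits for (r,p)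
   - Proposal c r q ps      : proposal of round r signed by c, with position q and
                              the round-r permits ps (signer, permitted position)
   - Timeout w r            : timeout(r) message signed by w *)
Inductive msg :=
| Permit of node & nat & P
| Block of node & nat & P & seq node
| Proposal of node & nat & P & seq (node * P)
| Timeout of node & nat.

Definition is_creator (u : node) (r : nat) : bool := (nat_of_ord u == r %% n)%N.

Definition msg_round (m : msg) : nat :=
  match m with
  | Permit _ r _ | Block _ r _ _ | Proposal _ r _ _ | Timeout _ r => r
  end.

Definition is_block_or_proposal (m : msg) : bool :=
  match m with Block _ _ _ _ | Proposal _ _ _ _ => true | _ => false end.

Definition valid_msg (m : msg) : Prop :=
  match m with
  | Block c r _ prf => is_creator c r /\ uniq prf /\ (2 * f + 1 <= size prf)%N
  | Proposal c r _ ps =>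
      is_creator c r /\ uniq (map fst ps) /\ (2 * f + 1 <= size ps)%N
  | _ => True
  end.

Definition signed_part (w : node) (c m : msg) : Prop :=
  match m with
  | Permit x _ _ => w = x /\ c = m
  | Timeout x _ => w = x /\ c = m
  | Block x r p prf => (w = x /\ c = m) \/ (w \in prf /\ c = Permit w r p)
  | Proposal x r _ ps =>
      (w = x /\ c = m) \/ (exists p, List.In (w, p) ps /\ c = Permit w r p)
  end.

Section Time.

Variable R : realType.   (* real time *)

(* A trace of an execution:
   - send w x m t  : node w sends message m to node x at time t
                     (a broadcast is a send to every node);
   - recv x m t    : node x receives (signature-verified) message m at time t;
   - start w r p t : node w starts executing round r, with current = p, at time t
                     (this is the moment its round variable becomes r). *)
Record trace := Trace {
  send : node -> node -> msg -> R -> Prop;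
  recv : node -> msg -> R -> Prop;
  start : node -> nat -> P -> R -> Prop
}.

Variables (tr : trace) (honest : {set node}).
(* Delta = delivery bound, ct = creator timeout, rt = round timeout,
   [ts, te] = the phase of synchronous operation. *)
Variables (Delta ct rt ts te : R).

Definition in_phase (t : R) := ts <= t <= te.

Definition holds_permits (u : node) (r : nat) (p : P) (t : R) : Prop :=
  exists S : {set node}, (2 * f + 1 <= #|S|)%N /\
    forall w, w \in S -> exists t', t' <= t /\ recv tr u (Permit w r p) t'.

(* By time t the creator u of round r has a reason to stop step (2):
   it received a block or proposal of a later round, or timeout messages of
   later rounds from 2f+1 distinct nodes, or it already left round r. *)
Definition stopped (u : node) (r : nat) (t : R) : Prop :=
  (exists m t', t' <= t /\ recv tr u m t' /\ valid_msg m /\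
     is_block_or_proposal m /\ (r < msg_round m)%N)
  \/ (exists S : {set node}, (2 * f + 1 <= #|S|)%N /\
        forall x, x \in S -> exists r' t', (r < r')%N /\ t' <= t /\
          recv tr u (Timeout x r') t')
  \/ (exists r' q t', (r < r')%N /\ t' <= t /\ start tr u r' q t').

(* Honest nodes follow the protocol; byzantine nodes are unconstrained except
   that they cannot forge signatures of honest nodes. *)
Record protocol_execution : Prop := {
  start_uniq : forall w r p p' s s', w \in honest ->
    start tr w r p s -> start tr w r p' s' -> p = p' /\ s = s';
  start_mono : forall w r r' p p' s s', w \in honest ->
    start tr w r p s -> start tr w r' p' s' -> (r < r')%N -> s <= s';
  start_trigger : forall w r p s, w \in honest -> start tr w r p s ->
    r = 0%N
    \/ (exists m t', t' <= s /\ recv tr w m t' /\ valid_msg m /\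
          is_block_or_proposal m /\ (msg_round m).+1 = r)
    \/ (exists r', r = r'.+1 /\ exists S : {set node},
          (2 * f + 1 <= #|S|)%N /\
          forall x, x \in S -> exists t', t' <= s /\ recv tr w (Timeout x r') t');
  (* step (1): upon starting round r, send permit (r, current) to v_{r mod n}
     (instantly, when in the synchronous phase) *)
  permit_on_start : forall w r p s, w \in honest -> start tr w r p s ->
    exists t, s <= t /\ (in_phase s -> t = s) /\
      forall x, is_creator x r -> send tr w x (Permit w r p) t;
  permit_only : forall w x w' r p t, w \in honest ->
    send tr w x (Permit w' r p) t ->
    w' = w /\ is_creator x r /\ exists s, s <= t /\ start tr w r p s;
  block_only : forall w x c r p prf t, w \in honest ->
    send tr w x (Block c r p prf) t ->
    [/\ c = w, valid_msg (Block c r p prf),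
        (exists q s, s <= t /\ start tr w r q s) &
        forall y, send tr w y (Block c r p prf) t];
  (* honest nodes create proposals only as creators, after the creator
     timeout expired (timers are reliable in the synchronous phase) *)
  proposal_only : forall w x c r q ps t, w \in honest ->
    send tr w x (Proposal c r q ps) t ->
    c = w /\ is_creator w r /\
    exists q' s, s <= t /\ start tr w r q' s /\ (ts <= s -> t <= te -> s + ct <= t);
  timeout_only : forall w x r t, w \in honest ->
    send tr w x (Timeout w r) t ->
    exists q s, s <= t /\ start tr w r q s /\ (ts <= s -> t <= te -> s + rt <= t);
  timeout_forward : forall w x w' r t, w \in honest -> w' != w ->
    send tr w x (Timeout w' r) t -> exists t', t' <= t /\ recv tr w (Timeout w' r) t';
  creator_rule : forall u r q s t p, u \in honest -> start tr u r q s ->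
    is_creator u r -> ts <= s -> t <= te -> s <= t -> t < s + ct ->
    holds_permits u r p t -> ~ stopped u r t ->
    exists t'' p' prf, [/\ s <= t'' <= t, valid_msg (Block u r p' prf),
      (forall w, w \in prf -> exists t', t' <= t'' /\ recv tr u (Permit w r p') t') &
      forall x, send tr u x (Block u r p' prf) t''];
  synchrony : forall w x m t, w \in honest -> x \in honest ->
    send tr w x m t -> in_phase t ->
    exists t', t <= t' <= t + Delta /\ recv tr x m t';
  authenticity : forall x m t w c, x \in honest -> w \in honest ->
    recv tr x m t -> signed_part w c m ->
    exists y t', t' <= t /\ send tr w y c t'
}.

(* r_max(t) >= i : some honest node has round variable >= i at time t *)
Definition rmax_ge (t : R) (i : nat) : Prop :=
  exists w r p s, [/\ w \in honest, (i <= r)%N, s <= t & start tr w r p s].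

Definition round_start_time (i : nat) (T : R) : Prop :=
  rmax_ge T i /\ forall t, rmax_ge t i -> T <= t.

Definition unified (i : nat) (T : R) : Prop :=
  round_start_time i T /\
  forall w, w \in honest -> exists p s, start tr w i p s /\ T <= s <= T + Delta.

Definition same_permit_position (i : nat) : Prop :=
  exists p, forall w x q t, w \in honest -> send tr w x (Permit w i q) t -> q = p.

Definition creates_block (u : node) (i : nat) : Prop :=
  exists t p prf, valid_msg (Block u i p prf) /\
    forall x, send tr u x (Block u i p prf) t.

End Time.
End PermitBFT.

(* Main.v *)
Require Import Defs.
From HB Require Import structures.
From mathcomp Require Import all_boot all_order all_algebra.
From mathcomp Require Import reals lra zify.
From Stdlib Require Import Classical.
Import Order.TTheory GRing.Theory Num.Theory.
Local Open Scope ring_scope.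

Lemma honest_in (n f : nat) (honest S : {set 'I_n}) : (3*f < n)%N -> #|honest| = (n-f)%N -> (2*f+1 <= #|S|)%N -> exists w, w \in S /\ w \in honest.
Proof.
move=> h1 h2 h3. have h4 := cardsUI S honest. have h5 := max_card (S :|: honest).
rewrite card_ord in h5.
have: (0 < #|S :&: honest|)%N by lia.
by case/card_gt0P => w; rewrite inE => /andP[]; exists w.
Qed.

Lemma honest_in_seq (n f : nat) (honest : {set 'I_n}) (s : seq 'I_n) : (3*f < n)%N -> #|honest| = (n-f)%N -> uniq s -> (2*f+1 <= size s)%N -> exists w, w \in s /\ w \in honest.
Proof.
move=> h1 h2 u h3. have [|w] := @honest_in n f honest [set x in s] h1 h2.
  by rewrite cardsE (card_uniqP u).
by rewrite inE; exists w.
Qed.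

Lemma in_fst (B : Type) (a : eqType) (w : a) (ps : seq (a * B)) : w \in map fst ps -> exists p, List.In (w, p) ps.
Proof.
elim: ps => //= [[x p] ps IH]; rewrite inE => /orP[/eqP -> | /IH [q Hq]].
  by exists p; left.
by exists q; right.
Qed.

Theorem corollary3 (n f : nat) (P : Type) (R : realType)
    (tr : trace n P R) (honest : {set 'I_n}) (Delta ct rt ts te : R)
    (i : nat) (T : R) (u : 'I_n) :
  (3 * f < n)%N ->
  #|honest| = (n - f)%N ->
  0 < Delta -> 2 * Delta < ct -> ct < 3 * Delta -> 5 * Delta < rt ->
  protocol_execution f tr honest Delta ct rt ts te ->
  (* round i lies in the phase of synchronous operation [ts, te] *)
  ts <= T -> T + 2 * Delta <= te ->
  unified tr honest Delta i T ->
  is_creator u i -> u \in honest ->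
  same_permit_position tr honest i ->
  creates_block f tr u i.
Proof.
move=> hf hH hD hct1 hct2 hrt E hts hte [[rmT minT] uni] cu uH [p same].
have lowT : forall w r q s, w \in honest -> (i <= r)%N -> start tr w r q s -> T <= s.
  by move=> w r q s wh ir st; apply: minT; exists w, r, q, s; split.
case: (classic (creates_block f tr u i)) => // nocb.
have L1 : forall x m t0, x \in honest -> recv tr x m t0 -> valid_msg f m ->
    is_block_or_proposal m ->
    exists w q s, [/\ w \in honest, s <= t0 & start tr w (msg_round m) q s].
  move=> x [//|c r q prf|c r q ps|//] t0 xh rc //=.
    move=> [_ [uq sz]] _.
    have [w [wi wh]] := @honest_in_seq n f honest _ hf hH uq sz.
    have [y [t1 [le1 sd]]] := authenticity E xh wh rc (or_intror (conj wi erefl)).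
    have [_ [_ [s [les st]]]] := permit_only E wh sd.
    exists w, q, s; split => //; exact: le_trans les le1.
  move=> [_ [uq sz]] _.
  have [w [wi wh]] := @honest_in_seq n f honest _ hf hH uq (leq_trans sz (eq_leq (esym (size_map _ _)))).
  have [p0 Hin] := @in_fst P _ w ps wi.
  have [y [t1 [le1 sd]]] := authenticity E xh wh rc
     (or_intror (ex_intro _ p0 (conj Hin erefl)) : signed_part w (Permit w r p0) (Proposal c r q ps)).
  have [_ [_ [s [les st]]]] := permit_only E wh sd.
  exists w, p0, s; split => //; exact: le_trans les le1.
have L2 : forall x r t0 w, x \in honest -> w \in honest -> recv tr x (Timeout P w r) t0 ->
    exists q s t1, [/\ s <= t1, t1 <= t0, start tr w r q s &
                       (ts <= s -> t1 <= te -> s + rt <= t1)].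
  move=> x r t0 w xh wh rc.
  have [y [t1 [le1 sd]]] := authenticity E xh wh rc (conj erefl erefl : signed_part w (Timeout P w r) (Timeout P w r)).
  have [q [s [les [st imp]]]] := timeout_only E wh sd.
  by exists q, s, t1; split.
pose t := T + 2 * Delta.
have C : forall r, (i < r)%N -> forall w q s, w \in honest -> start tr w r q s -> s <= t -> False.
  elim=> // r IH ltir w q s wh st les.
  have [ltir'|geir] := ltnP i r; last have eir : r = i by apply/eqP; rewrite eqn_leq geir -ltnS ltir.
    case: (start_trigger E wh st) => [//|[[m [t' [le' [rc [vm [bp rd]]]]]] | [r' [er [S [szS HS]]]]]].
      have [w' [q' [s' [wh' le2 st']]]] := L1 _ _ _ wh rc vm bp.
      case: rd st' => -> st'.
      apply: (IH ltir' w' q' s' wh' st'); apply: (le_trans le2); exact: le_trans le' les.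
    case: er => er; subst r'.
    have [x [xS xh]] := @honest_in n f honest _ hf hH szS.
    have [t' [le' rc]] := HS x xS.
    have [q' [s' [t1 [l1 l2 st' _]]]] := L2 _ _ _ _ wh xh rc.
    apply: (IH ltir' x q' s' xh st').
    apply: (le_trans l1); apply: (le_trans l2); exact: le_trans le' les.
  subst r.
  case: (start_trigger E wh st) => [//|[[m [t' [le' [rc [vm [bp rd]]]]]] | [r' [er [S [szS HS]]]]]].
    case: m rc vm bp rd => [//|c r0 q0 prf|c r0 q0 ps|//] rc /= vm _ [rd]; subst r0.
      have ecu : c = u by apply: ord_inj; move: vm => [/eqP -> _]; move: cu => /eqP ->.
      subst c.
      have [y [t1 [le1 sd]]] := authenticity E wh uH rc (or_introl (conj erefl erefl) : signed_part u (Block u i q0 prf) (Block u i q0 prf)).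
      have [_ vb _ all] := block_only E uH sd.
      by case: nocb; exists t1, q0, prf.
    have ecu : c = u by apply: ord_inj; move: vm => [/eqP -> _]; move: cu => /eqP ->.
    subst c.
    have [y [t1 [le1 sd]]] := authenticity E wh uH rc (or_introl (conj erefl erefl) : signed_part u (Proposal u i q0 ps) (Proposal u i q0 ps)).
    have [_ [_ [q' [s' [l1 [st' imp]]]]]] := proposal_only E uH sd.
    have Ts' := lowT _ _ _ _ uH (leqnn i) st'.
    have := imp (le_trans hts Ts').
    rewrite /t in les.
    have h1 : t1 <= te by apply: (le_trans le1); apply: (le_trans le'); apply: (le_trans les).
    move/(_ h1) => h2.
    have : t1 <= T + 2 * Delta by apply: (le_trans le1); apply: (le_trans le').
    lra.
  case: er => er; subst r'.
  have [x [xS xh]] := @honest_in n f honest _ hf hH szS.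
  have [t' [le' rc]] := HS x xS.
  have [q' [s' [t1 [l1 l2 st' imp]]]] := L2 _ _ _ _ wh xh rc.
  have Ts' := lowT _ _ _ _ xh (leqnn i) st'.
  rewrite /t in les.
  have h1 : t1 <= T + 2 * Delta by apply: (le_trans l2); apply: (le_trans le').
  have := imp (le_trans hts Ts') (le_trans h1 hte).
  lra.
have [pu [su [stu /andP[Tsu suT]]]] := uni u uH.
have hold : holds_permits f tr u i p t.
  exists honest; split; first by rewrite hH; lia.
  move=> w wh.
  have [pw [sw [stw /andP[h1 h2]]]] := uni w wh.
  have [t0 [le0 [eq0 snd]]] := permit_on_start E wh stw.
  have inph : in_phase ts te sw by rewrite /in_phase; apply/andP; split; lra.
  have sd := snd u cu; rewrite (eq0 inph) in sd.
  have epw := same _ _ _ _ wh sd; subst pw.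
  have [t' [/andP[l1 l2] rc]] := synchrony E wh uH sd inph.
  exists t'; split => //; rewrite /t; lra.
have nst : ~ stopped f tr u i t.
  move=> [[m [t' [le [rc [vm [bp lt]]]]]] | [[S [szS HS]] | [r' [q [t' [lt [le st]]]]]]].
  - have [w' [q' [s' [wh' le2 st']]]] := L1 _ _ _ uH rc vm bp.
    exact: (C _ lt w' q' s' wh' st' (le_trans le2 le)).
  - have [x [xS xh]] := @honest_in n f honest _ hf hH szS.
    have [r' [t' [lt [le' rc]]]] := HS x xS.
    have [q' [s' [t1 [l1 l2 st' _]]]] := L2 _ _ _ _ uH xh rc.
    apply: (C _ lt x q' s' xh st').
    apply: (le_trans l1); exact: le_trans l2 le'.
  - exact: (C _ lt u q t' uH st le).
have h3 : su <= t by rewrite /t; lra.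
have h4 : t < su + ct by rewrite /t; lra.
have [t'' [p' [prf [_ vb _ all]]]] :=
  creator_rule E uH stu cu (le_trans hts Tsu) hte h3 h4 hold nst.
by exists t'', p', prf.
Qed.
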